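(* Let $k\ge4$ be even and let $(i,j\mid s,t)\in\mathcal{O}(\mathbb{C},k)$ with $i,j,s,t\in\{1,2,\dots,k/2\}$. Then $i<j\iff s<t$, and $i<s\iff j<t$.
   Context: $\phi=\exp(2\pi\mathrm{i}/k)$, $\mathbf{k}=\{1,\dots,k-1\}$, $\mathbf{k}_0=\{0,\dots,k-1\}$. A quadruple $(i,j\mid s,t)\in\mathbf{k}^4$ with $i\ne s$ is an overlap if $\phi^\omega(\phi^j-1)(\phi^s-1)=(\phi^i-1)(\phi^t-1)$ for some $\omega\in\mathbf{k}_0$; it is trivial if one of $i\equiv\pm j$, $j\equiv\pm t$, $t\equiv\pm s$, $s\equiv\pm i\pmod k$ holds, nontrivial otherwise. $\mathcal{O}(\mathbb{C},k)$ is the set of nontrivial overlaps. *)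

(* Defs.v *)
From HB Require Import structures.
From mathcomp Require Import all_boot all_order all_algebra.
From mathcomp Require Import all_classical all_reals.
From mathcomp Require Import trigo.
From mathcomp Require Import complex.
Set Implicit Arguments. Unset Strict Implicit. Unset Printing Implicit Defensive.
Import Order.TTheory GRing.Theory Num.Theory.
Local Open Scope ring_scope.
Local Open Scope complex_scope.

Definition phi (R : realType) (k : nat) : R[i] :=
  (cos (2 * pi / k%:R)) +i* (sin (2 * pi / k%:R)).

Definition is_overlap (R : realType) (k i j s t : nat) : Prop :=
  [/\ (0 < i < k)%N, (0 < j < k)%N, (0 < s < k)%N, (0 < t < k)%N & i <> s] /\
  exists w : nat, (w < k)%N /\
    (phi R k) ^+ w * ((phi R k) ^+ j - 1) * ((phi R k) ^+ s - 1)
    = ((phi R k) ^+ i - 1) * ((phi R k) ^+ t - 1).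

Definition cong_pm (k a b : nat) : Prop :=
  a = b %[mod k] \/ (a + b = 0 %[mod k]).

Definition trivial_quad (k i j s t : nat) : Prop :=
  cong_pm k i j \/ cong_pm k j t \/ cong_pm k t s \/ cong_pm k s i.

Definition nontrivial_overlap (R : realType) (k i j s t : nat) : Prop :=
  is_overlap R k i j s t /\ ~ trivial_quad k i j s t.

(* Main.v *)
Require Import Defs.
From mathcomp Require Import all_boot all_order all_algebra.
From mathcomp Require Import all_classical all_reals.
From mathcomp Require Import trigo complex.
From mathcomp Require Import ring lra.
Import Order.TTheory GRing.Theory Num.Theory.
Local Open Scope ring_scope.
Local Open Scope complex_scope.

Section S.
Variable R : realType.
Definition N (z : R[i]) : R := let: a +i* b := z in a ^+ 2 + b ^+ 2.
Lemma mulE (a b c d : R) : (a +i* b) * (c +i* d) = (a*c - b*d) +i* (a*d + b*c).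
Proof. by []. Qed.
Lemma NM x y : N (x * y) = N x * N y.
Proof. case: x => a b; case: y => c d; rewrite mulE /N /=. ring. Qed.
Lemma moivre (x : R) (n : nat) : (cos x +i* sin x) ^+ n = cos (n%:R * x) +i* sin (n%:R * x).
Proof.
elim: n => [|n IH]; first by rewrite expr0 !mul0r cos0 sin0.
rewrite exprS IH mulE -natr1 mulrDl mul1r cosD sinD; congr (_ +i* _); ring.
Qed.
Lemma Nexp x n : N ((cos x +i* sin x) ^+ n) = 1.
Proof. by rewrite moivre /N /= cos2Dsin2. Qed.
Lemma Nsub1 x n : N ((cos x +i* sin x) ^+ n - 1) = 2 - 2 * cos (n%:R * x).
Proof. rewrite moivre /N /=. have := cos2Dsin2 (n%:R * x). rewrite oppr0 addr0. move=> h; nra. Qed.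
Lemma cross (x y z w : R) : 0 < x -> 0 < y -> 0 < z -> 0 < w -> x * w = y * z -> (x < y) <-> (z < w).
Proof.
move=> hx hy hz hw e; split => h.
- rewrite ltNge; apply/negP => h2. nra.
- rewrite ltNge; apply/negP => h2. nra.
Qed.
Definition g (k a : nat) : R := 2 - 2 * cos (a%:R * (2 * (pi : R) / k%:R)).
Lemma arg_in (k a : nat) : (0 < k)%N -> (a.*2 <= k)%N -> a%:R * (2 * (pi : R) / k%:R) \in `[0, (pi : R)].
Proof.
move=> k0 ak. have kp : (0 : R) < k%:R by rewrite ltr0n.
have pp : (0:R) < pi by exact: pi_gt0.
rewrite in_itv /=; apply/andP; split.
  by rewrite mulr_ge0 // divr_ge0 // ?mulr_ge0 // ltW.
have -> : a%:R * (2 * (pi : R) / k%:R) = pi * ((a.*2)%:R / k%:R).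
  rewrite -muln2 natrM; field; by rewrite gt_eqF.
rewrite ler_piMr; [|exact: ltW|]; [done|]. by rewrite ler_pdivrMr // mul1r ler_nat.
Qed.
Lemma gmono (k a b : nat) : (0 < k)%N -> (a.*2 <= k)%N -> (b.*2 <= k)%N -> (g k a < g k b) = (a < b)%N.
Proof.
move=> k0 ak bk. rewrite /g ltrD2l ltrN2 ltr_pM2l // ltr_cos ?arg_in //.
rewrite ltr_pM2r ?ltr_nat //. apply: divr_gt0; [apply: mulr_gt0 => //; exact: pi_gt0 | by rewrite ltr0n].
Qed.
End S.

Lemma dbl (k a : nat) : ~~ odd k -> (a <= k./2)%N -> (a.*2 <= k)%N.
Proof. move=> ev h. rewrite -[k in (_ <= k)%N](odd_double_half k) (negbTE ev) add0n leq_double //. Qed.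

Theorem lemma22 (R : realType) (k i j s t : nat) :
  (4 <= k)%N -> ~~ odd k ->
  (1 <= i <= k./2)%N -> (1 <= j <= k./2)%N ->
  (1 <= s <= k./2)%N -> (1 <= t <= k./2)%N ->
  nontrivial_overlap R k i j s t ->
  ((i < j)%N <-> (s < t)%N) /\ ((i < s)%N <-> (j < t)%N).
Proof.
move=> k4 ev /andP[i1 i2] /andP[j1 j2] /andP[s1 s2] /andP[t1 t2] [[_ [w [_ E]]] _].
have k0 : (0 < k)%N by apply: leq_trans k4.
have := congr1 (@N R) E. rewrite !NM /phi !Nexp !Nsub1 mul1r.
rewrite -![2 - 2 * cos _]/(g R k _) => e.
have g0 : g R k 0 = 0 by rewrite /g mul0r cos0 mulr1 subrr.
have pos a : (1 <= a)%N -> (a <= k./2)%N -> 0 < g R k a.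
  move=> a1 a2; rewrite -g0 gmono //; exact: dbl.
have mono a b : (a <= k./2)%N -> (b <= k./2)%N -> (g R k a < g R k b) = (a < b)%N.
  move=> ha hb; apply: gmono => //; exact: dbl.
split.
- rewrite -(mono i j) // -(mono s t) //; apply: cross; try exact: pos.
  by rewrite -e mulrC.
- rewrite -(mono i s) // -(mono j t) //; apply: cross; try exact: pos.
  by rewrite -e mulrC.
Qed.
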